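(* Let $Q$ be a commutative A-loop and define $x\oplus y = \big( ((xy)\backslash x)\cdot((yx)\backslash y)\big)^{-1}$. Then for all $x,y\in Q$, $x^2y^2 = (x\oplus y)^2$.
   Context: A loop is a set with a binary operation and neutral element $1$ in which all left and right translations $L_x:y\mapsto xy$, $R_x:y\mapsto yx$ are bijections; $\mathrm{Inn}(Q)$ is the stabilizer of $1$ in the group generated by all translations. A commutative A-loop is a commutative loop all of whose inner mappings are automorphisms. $x\backslash y$ denotes the unique $z$ with $xz=y$, $x^{-1}=x\backslash 1$, and $x^2=xx$. *)

(* Defs.v *)
(* A loop: a binary operation with neutral element [one] in which all left
   and right translations are bijections.  The bijectivity of L_x : y |-> x y
   and R_x : y |-> y x is expressed by the (necessarily unique) inverse maps
   ldiv x (= L_x^{-1}, i.e. x\y) and rdiv _ x (= R_x^{-1}, i.e. y/x). *)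
Record loop := Loop {
  carrier :> Type;
  mul : carrier -> carrier -> carrier;
  one : carrier;
  ldiv : carrier -> carrier -> carrier;
  rdiv : carrier -> carrier -> carrier;
  mul1q : forall x, mul one x = x;
  mulq1 : forall x, mul x one = x;
  ldivP : forall x y, mul x (ldiv x y) = y;
  ldivK : forall x y, ldiv x (mul x y) = y;
  rdivP : forall x y, mul (rdiv y x) x = y;
  rdivK : forall x y, rdiv (mul y x) x = y
}.

Arguments mul {l}.
Arguments one {l}.
Arguments ldiv {l}.
Arguments rdiv {l}.

Section LoopDefs.
Variable Q : loop.

(* Mlt(Q): the group generated by all translations L_x, R_x (closed under
   composition and inverses); its elements are finite composites of
   translations and their inverses. *)
Inductive mlt : (Q -> Q) -> Prop :=
| mlt_id : mlt (fun y => y)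
| mlt_L (x : Q) (f : Q -> Q) : mlt f -> mlt (fun y => mul x (f y))
| mlt_Linv (x : Q) (f : Q -> Q) : mlt f -> mlt (fun y => ldiv x (f y))
| mlt_R (x : Q) (f : Q -> Q) : mlt f -> mlt (fun y => mul (f y) x)
| mlt_Rinv (x : Q) (f : Q -> Q) : mlt f -> mlt (fun y => rdiv (f y) x).

Definition inner_mapping (f : Q -> Q) : Prop := mlt f /\ f one = one.

(* An automorphism: a bijective homomorphism (elements of Mlt(Q) are
   bijections automatically, but we require it explicitly). *)
Definition automorphism (f : Q -> Q) : Prop :=
  (exists g : Q -> Q, (forall x, g (f x) = x) /\ (forall x, f (g x) = x)) /\
  (forall x y, f (mul x y) = mul (f x) (f y)).

Definition commutative_loop : Prop := forall x y : Q, mul x y = mul y x.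

Definition A_loop : Prop := forall f, inner_mapping f -> automorphism f.

Definition commutative_A_loop : Prop := commutative_loop /\ A_loop.

Definition linv (x : Q) : Q := ldiv x one.
Definition sq (x : Q) : Q := mul x x.

Definition oplus (x y : Q) : Q :=
  linv (mul (ldiv (mul x y) x) (ldiv (mul y x) y)).

End LoopDefs.

Arguments mlt {Q}.
Arguments inner_mapping {Q}.
Arguments automorphism {Q}.
Arguments linv {Q}.
Arguments sq {Q}.
Arguments oplus {Q}.

(* Main.v *)
Require Import Defs.
From Stdlib Require Import Setoid.


Lemma cancel_l (Q : loop) (x y y' : Q) : mul x y = mul x y' -> y = y'.
Proof. intro H. rewrite <- (ldivK Q x y), <- (ldivK Q x y'), H. reflexivity. Qed.

Lemma ldiv_1l (Q : loop) (y : Q) : ldiv one y = y.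
Proof. rewrite <- (mul1q Q (ldiv one y)). apply ldivP. Qed.

Lemma aut_one (Q : loop) (f : Q -> Q) : automorphism f -> f one = one.
Proof.
  intros [_ Hm]. apply (cancel_l Q (f one)).
  rewrite <- Hm, !mulq1. reflexivity.
Qed.

Lemma aut_ldiv (Q : loop) (f : Q -> Q) (x y : Q) :
  automorphism f -> f (ldiv x y) = ldiv (f x) (f y).
Proof.
  intros [Hg Hm]. apply (cancel_l Q (f x)).
  rewrite <- Hm, !ldivP. reflexivity.
Qed.

Lemma aut_inv (Q : loop) (f : Q -> Q) (x : Q) :
  automorphism f -> f (linv x) = linv (f x).
Proof.
  intro H. unfold linv. rewrite aut_ldiv by exact H. rewrite aut_one by exact H.
  reflexivity.
Qed.

Lemma linv_r (Q : loop) (x : Q) : mul x (linv x) = one.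
Proof. unfold linv. apply ldivP. Qed.

Lemma linv_l (Q : loop) (Hc : commutative_loop Q) (x : Q) : mul (linv x) x = one.
Proof. rewrite Hc. apply linv_r. Qed.

Lemma linv_inv (Q : loop) (Hc : commutative_loop Q) (x : Q) : linv (linv x) = x.
Proof.
  apply (cancel_l Q (linv x)). rewrite linv_r, linv_l by exact Hc. reflexivity.
Qed.

Lemma Lxy_aut (Q : loop) (HA : A_loop Q) (u v : Q) :
  automorphism (fun w => ldiv (mul u v) (mul u (mul v w))).
Proof.
  apply HA. split.
  - apply (mlt_Linv Q (mul u v) (fun w => mul u (mul v w))).
    apply (mlt_L Q u (fun w => mul v w)).
    apply (mlt_L Q v (fun w => w)). apply mlt_id.
  - simpl. rewrite mulq1. rewrite <- (mulq1 Q (mul u v)) at 2. apply ldivK.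
Qed.

Lemma rho_aut (Q : loop) (Hc : commutative_loop Q) (HA : A_loop Q) (u : Q) :
  automorphism (fun w => mul u (mul (linv u) w)).
Proof.
  pose proof (Lxy_aut Q HA u (linv u)) as H.
  rewrite linv_r in H.
  destruct H as [[g [H1 H2]] Hm]. split.
  - exists g. split; intro x; [specialize (H1 x) | specialize (H2 x)];
      rewrite ?ldiv_1l in *; exact H1 || exact H2.
  - intros x y. specialize (Hm x y). rewrite !ldiv_1l in Hm. exact Hm.
Qed.

Lemma Lcomm (Q : loop) (Hc : commutative_loop Q) (HA : A_loop Q) (x w : Q) :
  mul (linv x) (mul x w) = mul x (mul (linv x) w).
Proof.
  pose proof (Lxy_aut Q HA (linv x) x) as H.
  rewrite (linv_l Q Hc) in H.
  assert (Hh : forall t, ldiv one (mul (linv x) (mul x t)) = mul (linv x) (mul x t))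
    by (intro; apply ldiv_1l).
  set (h := fun w0 => ldiv one (mul (linv x) (mul x w0))) in H.
  assert (h1 : h (linv x) = linv x).
  { unfold h. rewrite Hh, linv_r, mulq1. reflexivity. }
  assert (h2 : h x = x).
  { rewrite <- (linv_inv Q Hc x) at 1. rewrite aut_inv by exact H. rewrite h1.
    apply linv_inv; exact Hc. }
  destruct H as [_ Hm].
  specialize (Hm x (ldiv x w)). rewrite h2 in Hm. unfold h in Hm.
  rewrite !Hh, !ldivP in Hm. exact Hm.
Qed.

Lemma AIP (Q : loop) (Hc : commutative_loop Q) (HA : A_loop Q) (z a : Q) :
  linv (mul z a) = mul (linv z) (linv a).
Proof.
  set (x := mul z a). set (y := ldiv x z).
  assert (Hz : mul x y = z) by (unfold y; apply ldivP).
  pose proof (Lxy_aut Q HA x y) as H.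
  set (f := fun w => ldiv (mul x y) (mul x (mul y w))) in H.
  assert (fx : f x = x).
  { unfold f. rewrite (Hc y x). rewrite (Hc x (mul x y)). apply ldivK. }
  assert (fy' : f (linv y) = ldiv z x).
  { unfold f. rewrite linv_r, mulq1, Hz. reflexivity. }
  assert (fy : f y = linv (ldiv z x)).
  { rewrite <- (linv_inv Q Hc y). rewrite aut_inv by exact H. rewrite fy'. reflexivity. }
  assert (E1 : f (ldiv y (linv x)) = linv z).
  { unfold f. rewrite ldivP, linv_r, Hz. reflexivity. }
  rewrite aut_ldiv in E1 by exact H. rewrite aut_inv in E1 by exact H.
  rewrite fx, fy in E1.
  assert (E2 : mul (linv (ldiv z x)) (linv z) = linv x).
  { rewrite <- E1. apply ldivP. }
  rewrite <- E2. unfold x. rewrite ldivK. apply Hc.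
Qed.

Lemma AIPd (Q : loop) (Hc : commutative_loop Q) (HA : A_loop Q) (z x : Q) :
  linv (ldiv z x) = ldiv (linv z) (linv x).
Proof.
  apply (cancel_l Q (linv z)). rewrite ldivP, <- AIP by assumption.
  rewrite ldivP. reflexivity.
Qed.

Lemma Pcomm (Q : loop) (Hc : commutative_loop Q) (HA : A_loop Q) (z w : Q) :
  ldiv (linv z) (mul z w) = mul z (ldiv (linv z) w).
Proof.
  apply (cancel_l Q (linv z)). rewrite ldivP, Lcomm by assumption.
  rewrite ldivP. reflexivity.
Qed.

Lemma Elem (Q : loop) (Hc : commutative_loop Q) (HA : A_loop Q) (x y : Q) :
  ldiv (linv (mul x y)) (mul (mul x y) (linv x)) = mul x (mul y y).
Proof.
  set (z := mul x y).
  pose proof (Lxy_aut Q HA x y) as H.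
  set (f := fun w => ldiv (mul x y) (mul x (mul y w))) in H.
  assert (fy' : f (linv y) = ldiv z x).
  { unfold f. rewrite linv_r, mulq1. reflexivity. }
  assert (fy : f y = linv (ldiv z x)).
  { rewrite <- (linv_inv Q Hc y). rewrite aut_inv by exact H. rewrite fy'. reflexivity. }
  assert (fy2 : f y = ldiv z (mul x (mul y y))) by reflexivity.
  rewrite fy in fy2. rewrite AIPd in fy2 by assumption.
  rewrite Pcomm by assumption. rewrite fy2. apply ldivP.
Qed.

Lemma Sq (Q : loop) (Hc : commutative_loop Q) (HA : A_loop Q) (v w : Q) :
  mul (mul v w) (mul v w) = mul v (ldiv (linv w) (mul w v)).
Proof.
  set (r := ldiv (linv v) w).
  pose proof (Elem Q Hc HA (linv v) r) as E.
  assert (Hw : mul (linv v) r = w) by (unfold r; apply ldivP).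
  rewrite Hw, linv_inv in E by exact Hc.
  rewrite E.
  pose proof (rho_aut Q Hc HA v) as [_ Hm].
  rewrite Hm, Hw. reflexivity.
Qed.

Lemma Glem (Q : loop) (Hc : commutative_loop Q) (HA : A_loop Q) (c t : Q) :
  mul (ldiv c t) (ldiv (linv c) t) = mul t t.
Proof.
  set (p := ldiv c t).
  assert (Ht : t = mul c p) by (unfold p; symmetry; apply ldivP).
  pose proof (Sq Q Hc HA p c) as S.
  rewrite (Hc p c), <- Ht in S. rewrite S.
  reflexivity.
Qed.

Lemma Half (Q : loop) (Hc : commutative_loop Q) (HA : A_loop Q) (x y : Q) :
  mul x x = ldiv (mul (linv (ldiv (mul x y) x)) (ldiv (mul x y) y))
                 (linv (mul (ldiv (mul x y) x) (ldiv (mul x y) y))).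
Proof.
  set (z := mul x y). set (a := ldiv z x). set (b := ldiv z y).
  pose proof (Lxy_aut Q HA x y) as H.
  set (f := fun w => ldiv (mul x y) (mul x (mul y w))) in H.
  assert (fx : f x = x).
  { unfold f. rewrite (Hc y x). rewrite (Hc x (mul x y)). apply ldivK. }
  assert (fy' : f (linv y) = a).
  { unfold f. rewrite linv_r, mulq1. reflexivity. }
  assert (fy : f y = linv a).
  { rewrite <- (linv_inv Q Hc y). rewrite aut_inv by exact H. rewrite fy'. reflexivity. }
  assert (fb : f (ldiv y (ldiv x y)) = b).
  { unfold f. rewrite !ldivP. reflexivity. }
  set (c := mul (linv a) b).
  assert (K : ldiv x (linv a) = c).
  { rewrite <- fx, <- fy, <- aut_ldiv by exact H.
    rewrite <- (ldivP Q y (ldiv x y)) at 1.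
    destruct H as [_ Hm]. rewrite Hm, fy, fb. reflexivity. }
  assert (Hxc : mul c x = linv a).
  { rewrite Hc, <- K. apply ldivP. }
  pose proof (Elem Q Hc HA c x) as E.
  rewrite Hxc, linv_inv in E by exact Hc.
  assert (Hlc : linv c = mul a (linv b)).
  { unfold c. rewrite AIP, linv_inv by assumption. reflexivity. }
  rewrite Hlc, Lcomm in E by assumption.
  rewrite ldivK in E.
  rewrite <- (AIP Q Hc HA a b) in E.
  rewrite E, ldivK. reflexivity.
Qed.

Theorem theorem4p1 (Q : loop) (HQ : commutative_A_loop Q) (x y : Q) :
  mul (sq x) (sq y) = sq (oplus x y).
Proof.
  destruct HQ as [Hc HA].
  unfold sq, oplus.
  rewrite (Hc y x).
  set (z := mul x y). set (a := ldiv z x). set (b := ldiv z y).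
  pose proof (Half Q Hc HA x y) as H1. fold z a b in H1.
  pose proof (Half Q Hc HA y x) as H2. rewrite (Hc y x) in H2. fold z a b in H2.
  rewrite (Hc b a) in H2.
  assert (Hl : mul (linv b) a = linv (mul (linv a) b)).
  { rewrite AIP, linv_inv by assumption. apply Hc. }
  rewrite Hl in H2.
  rewrite H1, H2. apply Glem; assumption.
Qed.
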